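(* There exist $K$-algebras which are elementwise locally unit-regular but not locally unit-regular.
   Context: $K$ is a field; algebras are associative, not necessarily unital. A unital ring $S$ is unit-regular if for each $x\in S$ there is a unit $u$ of $S$ with $xux = x$. A $K$-algebra $R$ is locally unit-regular if every finite subset of $R$ is contained in a $K$-subalgebra of $R$ that has its own identity element and is unit-regular. A ring $R$ is elementwise locally unit-regular if for each $x \in R$ there exist an idempotent $e \in R$ and a unit $u$ of the corner ring $eRe$ (with identity $e$) such that $x \in eRe$ and $xux = x$. *)

(* Defs.v *)
From HB Require Import structures.
From mathcomp Require Import all_boot all_order all_algebra.
Set Implicit Arguments. Unset Strict Implicit. Unset Printing Implicit Defensive.
Import GRing.Theory.
Local Open Scope ring_scope.

Definition is_nu_algebra (K : fieldType) (V : lmodType K) (mul : V -> V -> V) : Prop :=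
  [/\ associative mul,
      (forall x y z, mul (x + y) z = mul x z + mul y z),
      (forall x y z, mul x (y + z) = mul x y + mul x z),
      (forall (a : K) x y, mul (a *: x) y = a *: mul x y)
    & (forall (a : K) x y, mul x (a *: y) = a *: mul x y)].

Definition is_subalgebra (K : fieldType) (V : lmodType K) (mul : V -> V -> V)
    (S : V -> Prop) : Prop :=
  [/\ S 0,
      (forall x y, S x -> S y -> S (x + y)),
      (forall (a : K) x, S x -> S (a *: x))
    & (forall x y, S x -> S y -> S (mul x y))].

Definition is_identity_of (K : fieldType) (V : lmodType K) (mul : V -> V -> V)
    (S : V -> Prop) (e : V) : Prop :=
  S e /\ (forall x, S x -> mul e x = x /\ mul x e = x).

Definition is_unit_in (K : fieldType) (V : lmodType K) (mul : V -> V -> V)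
    (S : V -> Prop) (e u : V) : Prop :=
  S u /\ exists v, S v /\ mul u v = e /\ mul v u = e.

Definition unital_unit_regular (K : fieldType) (V : lmodType K) (mul : V -> V -> V)
    (S : V -> Prop) : Prop :=
  exists e, is_identity_of mul S e /\
    (forall x, S x -> exists u, is_unit_in mul S e u /\ mul (mul x u) x = x).

Definition locally_unit_regular (K : fieldType) (V : lmodType K) (mul : V -> V -> V) : Prop :=
  forall s : seq V, exists S : V -> Prop,
    [/\ is_subalgebra mul S, (forall x, x \in s -> S x) & unital_unit_regular mul S].

Definition corner (K : fieldType) (V : lmodType K) (mul : V -> V -> V) (e : V) : V -> Prop :=
  fun x => exists r, x = mul (mul e r) e.

Definition elementwise_locally_unit_regular (K : fieldType) (V : lmodType K)
    (mul : V -> V -> V) : Prop :=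
  forall x : V, exists e u : V,
    [/\ mul e e = e, corner mul e x, is_unit_in mul (corner mul e) e u
      & mul (mul x u) x = x].

(* Main.v *)
Require Import Defs.
From mathcomp Require Import all_boot all_order all_algebra.
From HB Require Import structures.
From mathcomp Require Import all_boot all_order all_algebra.
From mathcomp Require Import boolp classical_sets functions.
Set Implicit Arguments. Unset Strict Implicit. Unset Printing Implicit Defensive.
Import GRing.Theory.
Local Open Scope ring_scope.

Section Swindle.
Variables (R : pzRingType) (P Q S T x y A C Dd Ii : R).
Hypotheses (xyx : x*y*x = x) (yxy : y*x*y = y)
  (Px : P*x = x) (xP : x*P = x) (Py : P*y = y) (yP : y*P = y)
  (TS : T*S = Q) (ST : S*T = Q - P) (PS : P*S = 0) (TP : T*P = 0)
  (AC1 : A + C = Q) (DI1 : Dd + Ii = Q) (AC : A*C = 0) (CA : C*A = 0)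
  (DI : Dd*Ii = 0) (ID : Ii*Dd = 0)
  (AA : A*A = A) (CC : C*C = C) (DD : Dd*Dd = Dd) (II : Ii*Ii = Ii)
  (AS : A*S = S*A) (CS : C*S = S*C) (DS : Dd*S = S*Dd) (IS : Ii*S = S*Ii)
  (TA : T*A = A*T) (TC : T*C = C*T) (TD : T*Dd = Dd*T) (TI : T*Ii = Ii*T)
  (AP : A*P = P - y*x) (PA : P*A = P - y*x) (CP : C*P = y*x)
  (DP : Dd*P = P - x*y) (PD : P*Dd = P - x*y) (IP : Ii*P = x*y)
  (QP : Q*P = P) (PQ : P*Q = P)
  (QA : Q*A = A) (AQ : A*Q = A) (QC : Q*C = C) (CQ : C*Q = C)
  (QD : Q*Dd = Dd) (DQ : Dd*Q = Dd) (QI : Q*Ii = Ii) (IQ : Ii*Q = Ii)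
  (QS : Q*S = S) (SQ : S*Q = S) (QT : Q*T = T) (TQ : T*Q = T).

Let M := A + S*C.
Let N := Dd + Ii*T.
Let N' := Dd + S*Ii.
Let M' := A + C*T.
Definition uu := y + M*N.
Definition vv := x + N'*M'.

Lemma xA0 : x*A = 0.
Proof. by rewrite -xP -mulrA PA mulrBr xP mulrA xyx subrr. Qed.
Lemma Ay0 : A*y = 0.
Proof. by rewrite -Py mulrA AP mulrBl Py yxy subrr. Qed.
Lemma Dx0 : Dd*x = 0.
Proof. by rewrite -Px mulrA DP mulrBl Px xyx subrr. Qed.
Lemma yD0 : y*Dd = 0.
Proof. by rewrite -yP -mulrA PD mulrBr yP mulrA yxy subrr. Qed.
Lemma xS0 : x*S = 0. Proof. by rewrite -xP -mulrA PS mulr0. Qed.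
Lemma yS0 : y*S = 0. Proof. by rewrite -yP -mulrA PS mulr0. Qed.
Lemma Tx0 : T*x = 0. Proof. by rewrite -Px mulrA TP mul0r. Qed.
Lemma Ty0 : T*y = 0. Proof. by rewrite -Py mulrA TP mul0r. Qed.

Lemma Nx0 : N*x = 0.
Proof. by rewrite /N mulrDl Dx0 -mulrA Tx0 mulr0 addr0. Qed.
Lemma yN'0 : y*N' = 0.
Proof. by rewrite /N' mulrDr yD0 mulrA yS0 mul0r addr0. Qed.
Lemma xM0 : x*M = 0.
Proof. by rewrite /M mulrDr xA0 mulrA xS0 mul0r addr0. Qed.
Lemma M'y0 : M'*y = 0.
Proof. by rewrite /M' mulrDl Ay0 -mulrA Ty0 mulr0 addr0. Qed.

Lemma NN' : N*N' = Q.
Proof.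
have e1 : Dd*(S*Ii) = 0 by rewrite mulrA DS -mulrA DI mulr0.
have e2 : Ii*T*Dd = 0 by rewrite -mulrA TD mulrA ID mul0r.
have e3 : Ii*T*(S*Ii) = Ii by rewrite -mulrA (mulrA T) TS QI II.
by rewrite /N /N' mulrDl !mulrDr DD e1 e2 e3 addr0 add0r DI1.
Qed.
Lemma MM' : M*M' = Q - y*x.
Proof.
have e1 : A*(C*T) = 0 by rewrite mulrA AC mul0r.
have e2 : S*C*A = 0 by rewrite -mulrA CA mulr0.
have e3 : S*C*(C*T) = C - y*x by rewrite -mulrA (mulrA C) CC mulrA -CS -mulrA ST mulrBr CQ CP.
by rewrite /M /M' mulrDl !mulrDr AA e1 e2 e3 addr0 add0r addrA AC1.
Qed.
Lemma M'M : M'*M = Q.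
Proof.
have e1 : A*(S*C) = 0 by rewrite mulrA AS -mulrA AC mulr0.
have e2 : C*T*A = 0 by rewrite -mulrA TA mulrA CA mul0r.
have e3 : C*T*(S*C) = C by rewrite -mulrA (mulrA T) TS QC CC.
by rewrite /M /M' mulrDl !mulrDr AA e1 e2 e3 addr0 add0r AC1.
Qed.
Lemma N'N : N'*N = Q - x*y.
Proof.
have e1 : Dd*(Ii*T) = 0 by rewrite mulrA DI mul0r.
have e2 : S*Ii*Dd = 0 by rewrite -mulrA ID mulr0.
have e3 : S*Ii*(Ii*T) = Ii - x*y by rewrite -mulrA (mulrA Ii) II mulrA -IS -mulrA ST mulrBr IQ IP.
by rewrite /N /N' mulrDl !mulrDr DD e1 e2 e3 addr0 add0r addrA DI1.
Qed.

Lemma uv : uu*vv = Q.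
Proof.
have e1 : y*(N'*M') = 0 by rewrite mulrA yN'0 mul0r.
have e2 : M*N*x = 0 by rewrite -mulrA Nx0 mulr0.
have MQ : M*Q = M by rewrite /M mulrDl AQ -mulrA CQ.
have e3 : M*N*(N'*M') = Q - y*x by rewrite -mulrA (mulrA N) NN' mulrA MQ MM'.
by rewrite /uu /vv mulrDl (mulrDr y) (mulrDr (M*N)) e1 e2 e3 addr0 add0r addrC subrK.
Qed.
Lemma vu : vv*uu = Q.
Proof.
have e1 : x*(M*N) = 0 by rewrite mulrA xM0 mul0r.
have e2 : N'*M'*y = 0 by rewrite -mulrA M'y0 mulr0.
have QN : Q*N = N by rewrite /N mulrDr QD mulrA QI.
have e3 : N'*M'*(M*N) = Q - x*y by rewrite -mulrA (mulrA M') M'M QN N'N.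
by rewrite /uu /vv mulrDl (mulrDr x) (mulrDr (N'*M')) e1 e2 e3 addr0 add0r addrC subrK.
Qed.
Lemma xux : x*uu*x = x.
Proof. by rewrite /uu mulrDr mulrDl xyx mulrA xM0 !mul0r addr0. Qed.
Lemma Quu : Q*uu*Q = uu.
Proof.
have Qy : Q*y = y by rewrite -Py mulrA QP.
have yQ : y*Q = y by rewrite -yP -mulrA PQ.
have QM : Q*M = M by rewrite /M mulrDr QA mulrA QS.
have NQ : N*Q = N by rewrite /N mulrDl DQ -mulrA TQ.
by rewrite /uu mulrDr mulrDl Qy yQ mulrA QM -mulrA NQ.
Qed.
Lemma Qvv : Q*vv*Q = vv.
Proof.
have Qx : Q*x = x by rewrite -Px mulrA QP.
have xQ : x*Q = x by rewrite -xP -mulrA PQ.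
have QN : Q*N' = N' by rewrite /N' mulrDr QD mulrA QS.
have MQ : M'*Q = M' by rewrite /M' mulrDl AQ -mulrA TQ.
by rewrite /vv mulrDr mulrDl Qx xQ mulrA QN -mulrA MQ.
Qed.
Lemma swindle_all : [/\ uu*vv = Q, vv*uu = Q, x*uu*x = x, Q*uu*Q = uu & Q*vv*Q = vv].
Proof. split; [exact: uv | exact: vu | exact: xux | exact: Quu | exact: Qvv]. Qed.
End Swindle.


Section NonLocal.
Variables (R : pzRingType) (s t p q f u w : R).
Hypotheses (ts : t * s = p) (st : s * t = p - q) (ps : p * s = s) (sp : s * p = s)
  (pt : p * t = t) (tp : t * p = t) (pp : p * p = p)
  (fs : f * s = s) (sf : s * f = s) (ft : f * t = t) (tf : t * f = t)
  (fp : f * p = p) (pf : p * f = p) (ff : f * f = f)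
  (fu : f * u = u) (uf : u * f = u) (fw : f * w = w) (wf : w * f = w)
  (uw : u * w = f) (wu : w * u = f)
  (reg : (s + (f - p)) * u * (s + (f - p)) = s + (f - p)).

Lemma nonlocal : q = 0.
Proof.
pose g := f - p.
have gs : g * s = 0 by rewrite /g mulrBl fs ps subrr.
have sg : s * g = 0 by rewrite /g mulrBr sf sp subrr.
have tg : t * g = 0 by rewrite /g mulrBr tf tp subrr.
have gt : g * t = 0 by rewrite /g mulrBl ft pt subrr.
have gg : g * g = g by rewrite /g mulrBr !mulrBl ff pf fp pp subrr subr0.
have fg : f * g = g by rewrite /g mulrBr ff fp.
have gf : g * f = g by rewrite /g mulrBl ff pf.
pose X := s + g. pose T' := t + g.
have TX : T' * X = f by rewrite /T' /X mulrDl (mulrDr t s g) (mulrDr g s g) ts tg gs gg addr0 add0r /g addrC subrK.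
have XT : X * T' = g + (p - q) by rewrite /T' /X mulrDl (mulrDr s t g) (mulrDr g t g) st sg gt gg addr0 add0r addrC.
have fX : f * X = X by rewrite /X (mulrDr f s g) fs fg.
have TF : T'*f = T' by rewrite /T' mulrDl tf gf.
have UX : u * X = f.
  have := congr1 (fun z => T'*z) reg; rewrite !mulrA TX -mulrA.
  by rewrite mulrA fu -/g -/X.
have wX : w = X by rewrite -wf -UX mulrA wu fX.
have XU : X * u = f by rewrite -wX.
have TU : T' = u by rewrite -TF -XU mulrA TX fu.
move: XT; rewrite TU XU /g => /esym /eqP.
by rewrite addrA subrK => /eqP h; have := congr1 (fun z => - f + z) h; rewrite addNr addKr => /eqP; rewrite oppr_eq0 => /eqP.
Qed.
End NonLocal.

Lemma idem_compl (R : pzRingType) (P e : R) : P * P = P -> P * e = e -> e * P = e -> e * e = e ->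
  [/\ (P - e) * (P - e) = P - e, e * (P - e) = 0, (P - e) * e = 0, P * (P - e) = P - e & (P - e) * P = P - e].
Proof.
move=> PP Pe eP ee; split.
- by rewrite mulrBr !mulrBl PP Pe eP ee subrr subr0.
- by rewrite mulrBr eP ee subrr.
- by rewrite mulrBl Pe ee subrr.
- by rewrite mulrBr PP Pe.
- by rewrite mulrBl PP eP.
Qed.

Lemma zhelp (Z : zmodType) (a b c d : Z) : a + b = c + d -> a - c = d - b.
Proof. by move=> h; apply/eqP; rewrite subr_eq addrAC eq_sym subr_eq h addrC. Qed.

Section Compl.
Local Open Scope classical_set_scope.
Variables (K : fieldType) (V : lmodType K).
Definition subsp (W : V -> Prop) := W 0 /\ forall (a:K) u w, W u -> W w -> W (a *: u + w).

Lemma subsp_add W : subsp W -> forall u w, W u -> W w -> W (u + w).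
Proof. by move=> [_ h] u w hu hw; have := h 1 u w hu hw; rewrite scale1r. Qed.
Lemma subsp_scale W : subsp W -> forall a u, W u -> W (a *: u).
Proof. by move=> [h0 h] a u hu; have := h a u 0 hu h0; rewrite addr0. Qed.

Definition Pz (W M : V -> Prop) (C : set V) :=
  [/\ (forall v, C v -> W v), (forall a u w, C u -> C w -> C (a *: u + w))
    & (forall v, C v -> M v -> v = 0)].

Lemma complement (W M : V -> Prop) : subsp W -> subsp M -> (forall v, M v -> W v) ->
  exists C : V -> Prop, [/\ subsp C, (forall v, C v -> W v), (forall v, C v -> M v -> v = 0)
     & (forall w, W w -> exists m c, [/\ M m, C c & w = m + c])].
Proof.
move=> sW sM MW.
have [A [[AW Acl Adj] Amax]] : exists A, Pz W M A /\ forall B, A `<` B -> ~ Pz W M B.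
  apply: Zorn_bigcup => F FP Ftot; split.
  - by move=> v [X FX Xv]; have [h _ _] := FP X FX; apply: h.
  - move=> a u w [X FX Xu] [Y FY Yw].
    have [XY|YX] := Ftot X Y FX FY.
      exists Y => //; have [_ h _] := FP Y FY; apply: h => //; exact: XY.
    exists X => //; have [_ h _] := FP X FX; apply: h => //; exact: YX.
  - by move=> v [X FX Xv] Mv; have [_ _ h] := FP X FX; apply: h.
have A0 : A 0.
  apply: contrapT => nA0; apply: (Amax (A `|` [set 0])).
    split; first by move=> v Av; left.
    by move=> /(_ 0 (or_intror erefl)).
  split.
  - by move=> v [/AW //|->]; case: sW.
  - move=> a u w [Au|->] [Aw|->].
    + by left; apply: Acl.
    + left; rewrite addr0; have -> : a *: u = (a - 1) *: u + u by rewrite scalerBl scale1r subrK.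
      by apply: Acl.
    + by rewrite scaler0 add0r; left.
    + by right; rewrite scaler0 addr0.
  - by move=> v [Av|->] Mv //; apply: Adj.
exists A; split => //.
move=> w Ww; apply: contrapT => nd.
pose B : set V := fun v => exists c (l : K), A c /\ v = c + l *: w.
apply: (Amax B).
  split.
    by move=> v Av; exists v, 0; rewrite scale0r addr0.
  move=> BA; have Aw : A w by apply: BA; exists 0, 1; rewrite add0r scale1r.
  by apply: nd; exists 0, w; split => //; [case: sM | rewrite add0r].
split.
- move=> v [c [l [Ac ->]]]; apply: subsp_add => //; first exact: AW.
  exact: subsp_scale.
- move=> a u v [c1 [l1 [Ac1 ->]]] [c2 [l2 [Ac2 ->]]].
  exists (a *: c1 + c2), (a * l1 + l2); split; first by apply: Acl.
  rewrite scalerDr scalerDl scalerA !addrA; congr (_ + _); rewrite -!addrA; congr (_ + _).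
  by rewrite addrC.
- move=> v [c [l [Ac ->]]] Mv.
  have [l0|ln0] := eqVneq l 0.
    by move: Mv; rewrite l0 scale0r addr0 => Mc; apply: Adj.
  exfalso; apply: nd; exists (l^-1 *: (c + l *: w)), ((- l^-1) *: c); split.
  + exact: subsp_scale.
  + by have := Acl (- l^-1) c 0 Ac A0; rewrite addr0.
  + by rewrite scalerDr scalerA mulVf // scale1r addrC addrA scaleNr addNr add0r.
Qed.
End Compl.

Section Alg.
Variable K : fieldType.
Definition I := nat -> nat.
Definition V := I -> K^o.
Definition inI (n : nat) (f : I) : Prop := forall i, (n <= i)%N -> f i = 0%N.
Definition P (n : nat) (v : V) : V := fun f => if `[< inI n f >] then v f else 0.
Definition lin (x : V -> V) : Prop := forall (a : K) u w, x (a *: u + w) = a *: x u + x w.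
Definition bnd n (x : V -> V) := forall v, x v = P n (x (P n v)).
Definition Rp : {pred (V -> V)} := fun x => `[< lin x /\ exists n, bnd n x >].

Lemma inI_mono n m f : (n <= m)%N -> inI n f -> inI m f.
Proof. by move=> nm H i mi; apply: H; apply: leq_trans mi. Qed.

Lemma PP n m v : (n <= m)%N -> P n (P m v) = P n v /\ P m (P n v) = P n v.
Proof.
move=> nm; split; apply/funext => f; rewrite /P.
  case: (asboolP (inI n f)) => // H; by rewrite (asboolT (inI_mono nm H)).
case: (asboolP (inI n f)) => H; case: (asboolP (inI m f)) => // H'.
by case: H'; apply: inI_mono nm H.
Qed.

Lemma bnd_mono n m x : (n <= m)%N -> bnd n x -> bnd m x.
Proof.
move=> nm b v; by rewrite [in RHS]b (PP _ nm).2 (PP v nm).1 -b.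
Qed.

Lemma vaddE (u w : V) f : (u + w) f = u f + w f. Proof. by []. Qed.
Lemma vscaleE (a : K) (u : V) f : (a *: u) f = a *: u f. Proof. by []. Qed.
Lemma v0E f : (0 : V) f = 0. Proof. by []. Qed.
Lemma faddE (x y : V -> V) v : (x + y) v = x v + y v. Proof. by []. Qed.
Lemma fscaleE (a : K) (x : V -> V) v : (a *: x) v = a *: x v. Proof. by []. Qed.
Lemma f0E v : (0 : V -> V) v = 0. Proof. by []. Qed.

Lemma fsubE (x y : V -> V) v f : (x - y) v f = x v f - y v f. Proof. by []. Qed.

Lemma P_lin n : lin (P n).
Proof.
move=> a u w; apply/funext => f; rewrite /P /=.
by rewrite !vaddE !vscaleE; case: asboolP => _ //=; rewrite scaler0 addr0.
Qed.

Lemma P_add n u w : P n (u + w) = P n u + P n w.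
Proof. by have := P_lin n 1 u w; rewrite !scale1r. Qed.
Lemma P_scale n (a : K) u : P n (a *: u) = a *: P n u.
Proof.
have h0 : P n 0 = 0 by apply/funext => f; rewrite /P; case: asboolP.
by have := P_lin n a u 0; rewrite !addr0 h0 addr0.
Qed.


Lemma lin_add x : lin x -> forall u w, x (u + w) = x u + x w.
Proof. by move=> lx u w; have := lx 1 u w; rewrite !scale1r. Qed.
Lemma lin0 x : lin x -> x 0 = 0.
Proof. by move=> lx; have := lin_add lx 0 0; rewrite addr0 => /(canLR (addKr (x 0))); rewrite addNr. Qed.
Lemma lin_scale x : lin x -> forall (a : K) u, x (a *: u) = a *: x u.
Proof. by move=> lx a u; have := lx a u 0; rewrite addr0 lin0 // addr0. Qed.

Definition linp : {pred (V -> V)} := fun x => `[< lin x >].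

Lemma linp_closed : subsemimod_closed linp.
Proof.
split; [split|].
- by apply/asboolP => a u w; rewrite !f0E scaler0 addr0.
- move=> x y /asboolP lx /asboolP ly; apply/asboolP => a u w.
  by rewrite !faddE lx ly scalerDr !addrA; congr (_ + _); rewrite -!addrA [X in _ + X]addrC.
- move=> a x /asboolP lx; apply/asboolP => b u w.
  by rewrite !fscaleE lx scalerDr !scalerA mulrC.
Qed.

HB.instance Definition _ := GRing.isSubmodClosed.Build K (V -> V) linp linp_closed.

Record L := MkL { lval :> V -> V; lvalP : lval \in linp }.
HB.instance Definition _ := [isSub for lval].
HB.instance Definition _ := [Choice of L by <:].
HB.instance Definition _ := [SubChoice_isSubLmodule of L by <:].

Lemma linL (x : L) : lin x. Proof. exact/asboolP/lvalP. Qed.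

Lemma L_eq (x y : L) : (forall v, x v = y v) -> x = y.
Proof. by move=> h; apply: val_inj; apply/funext. Qed.

Lemma lin_comp (x y : L) : (fun v => x (y v)) \in linp.
Proof. by apply/asboolP => a u w; rewrite (linL y) (linL x). Qed.
Lemma lin_id : (fun v : V => v) \in linp.
Proof. by apply/asboolP. Qed.

Definition Lmul (x y : L) : L := MkL (lin_comp x y).
Definition L1 : L := MkL lin_id.

Lemma LaddE (x y : L) v : (x + y) v = x v + y v. Proof. by []. Qed.
Lemma LscaleE (a : K) (x : L) v : (a *: x) v = a *: x v. Proof. by []. Qed.
Lemma L0E v : (0 : L) v = 0. Proof. by []. Qed.
Lemma LoppE (x : L) v : (- x) v = - x v. Proof. by []. Qed.

Lemma LmulA : associative Lmul. Proof. by move=> x y z; apply: L_eq. Qed.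
Lemma Lmul1 : left_id L1 Lmul. Proof. by move=> x; apply: L_eq. Qed.
Lemma Lmulr1 : right_id L1 Lmul. Proof. by move=> x; apply: L_eq. Qed.
Lemma LmulDl : left_distributive Lmul +%R. Proof. by move=> x y z; apply: L_eq. Qed.
Lemma LmulDr : right_distributive Lmul +%R.
Proof. move=> x y z; apply: L_eq => v /=; exact: (lin_add (linL x)). Qed.

HB.instance Definition _ := @GRing.Zmodule_isPzRing.Build L L1 Lmul LmulA Lmul1 Lmulr1 LmulDl LmulDr.

Lemma LmulE (x y : L) v : (x * y) v = x (y v). Proof. by []. Qed.


Lemma asbE (A B : Prop) : (A <-> B) -> `[<A>] = `[<B>].
Proof. by move=> h; rewrite (propext h). Qed.

Definition upd (f : I) n k : I := fun i => if i == n then k else f i.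

Lemma upd_inS n k f : inI n.+1 (upd f n k) <-> inI n.+1 f.
Proof.
split=> h i hi; have := h i hi; rewrite /upd;
  have -> : (i == n) = false by apply/negbTE; rewrite neq_ltn hi orbT.
  by []. by [].
Qed.
Lemma upd0_in n f : inI n (upd f n 0) <-> inI n.+1 f.
Proof.
split=> h i hi.
  have := h i (ltnW hi); rewrite /upd.
  by have -> : (i == n) = false by apply/negbTE; rewrite neq_ltn hi orbT.
rewrite /upd; case: eqP => // /eqP ne; apply: h; by rewrite ltn_neqAle eq_sym ne hi.
Qed.
Lemma upd_upd f n a b : upd (upd f n a) n b = upd f n b.
Proof. by apply/funext => i; rewrite /upd; case: eqP. Qed.
Lemma upd_same f n : upd f n (f n) = f.
Proof. by apply/funext => i; rewrite /upd; case: eqP => // ->. Qed.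
Lemma upd_at f n k : upd f n k n = k.
Proof. by rewrite /upd eqxx. Qed.
Lemma inI_at n f : inI n f -> f n = 0%N.
Proof. by move=> h; apply: h. Qed.
Lemma inI_upd0 n g : inI n g -> upd g n 0 = g.
Proof. by move=> h; rewrite -(inI_at h) upd_same. Qed.
Lemma inI_upd_k n g k : inI n (upd g n k) -> k = 0%N.
Proof. by move=> h; have := inI_at h; rewrite upd_at. Qed.
Lemma inI_Sn n g : inI n g -> inI n.+1 g.
Proof. by apply: inI_mono. Qed.

Definition Sf n (v : V) : V := fun f =>
  if `[< inI n.+1 f >] && (0 < f n)%N then v (upd f n (f n).-1) else 0.
Definition Tf n (v : V) : V := fun f =>
  if `[< inI n.+1 f >] then v (upd f n (f n).+1) else 0.
Definition fib n (v : V) k : V := fun g =>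
  if `[< inI n g >] then v (upd g n k) else 0.
Definition Df n (a : L) (v : V) : V := fun f =>
  if `[< inI n.+1 f >] then a (fib n v (f n)) (upd f n 0) else 0.

Lemma Sf_lin n : Sf n \in linp.
Proof.
apply/asboolP => a u w; apply/funext => f; rewrite /Sf !vaddE !vscaleE.
by case: ifP => _; rewrite ?scaler0 ?addr0.
Qed.
Lemma Tf_lin n : Tf n \in linp.
Proof.
apply/asboolP => a u w; apply/funext => f; rewrite /Tf !vaddE !vscaleE.
by case: ifP => _; rewrite ?scaler0 ?addr0.
Qed.
Lemma fib_lin n k (a : K) u w : fib n (a *: u + w) k = a *: fib n u k + fib n w k.
Proof.
apply/funext => f; rewrite /fib !vaddE !vscaleE.
by case: ifP => _; rewrite ?scaler0 ?addr0.
Qed.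
Lemma Df_lin n a : Df n a \in linp.
Proof.
apply/asboolP => b u w; apply/funext => f; rewrite /Df !vaddE !vscaleE.
case: ifP => _; rewrite ?scaler0 ?addr0 //.
by rewrite fib_lin (linL a).
Qed.
Lemma P_linp n : P n \in linp.
Proof. exact/asboolP/P_lin. Qed.

Definition PL n : L := MkL (P_linp n).
Definition SL n : L := MkL (Sf_lin n).
Definition TL n : L := MkL (Tf_lin n).
Definition DL n a : L := MkL (Df_lin n a).


Lemma TS n : TL n * SL n = PL n.+1.
Proof.
apply: L_eq => v; apply/funext => f; rewrite LmulE /= /Tf /Sf /P.
case: (asboolP (inI n.+1 f)) => h //.
by rewrite (asboolT (proj2 (upd_inS _ _ _) h)) upd_at /= upd_upd upd_same.
Qed.

Lemma ST n : SL n * TL n = PL n.+1 - PL n.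
Proof.
apply: L_eq => v; apply/funext => f; rewrite LmulE /= fsubE /Tf /Sf /P.
case: (asboolP (inI n.+1 f)) => h /=; last first.
  case: (asboolP (inI n f)) => h'; last by rewrite subr0.
  by case: h; apply: inI_Sn.
case: (posnP (f n)) => fn.
  rewrite (asboolT (_ : inI n f)) ?subrr //.
  by have := (upd0_in n f).2 h; rewrite -fn upd_same.
rewrite (asboolT (proj2 (upd_inS _ _ _) h)) upd_at prednK // upd_upd upd_same.
rewrite (asboolF (_ : ~ inI n f)) ?subr0 // => h'.
by move: fn; rewrite (inI_at h').
Qed.

Lemma PS n : PL n * SL n = 0.
Proof.
apply: L_eq => v; apply/funext => f; rewrite LmulE /= /Sf /P.
case: (asboolP (inI n f)) => h //.
by rewrite (inI_at h) andbF.
Qed.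

Lemma TP n : TL n * PL n = 0.
Proof.
apply: L_eq => v; apply/funext => f; rewrite LmulE /= /Tf /P.
case: (asboolP (inI n.+1 f)) => h //.
by rewrite (asboolF (_ : ~ inI n (upd f n (f n).+1))) // => /inI_upd_k.
Qed.


Lemma PPL n m : (n <= m)%N -> PL n * PL m = PL n /\ PL m * PL n = PL n.
Proof. by move=> nm; split; apply: L_eq => v; rewrite LmulE /= ?(PP v nm).1 ?(PP v nm).2. Qed.
Lemma PLL n : PL n * PL n = PL n.
Proof. exact: (PPL (leqnn n)).1. Qed.

Lemma PS1 n : PL n.+1 * SL n = SL n.
Proof.
apply: L_eq => v; apply/funext => f; rewrite LmulE /= /Sf /P.
by case: (asboolP (inI n.+1 f)).
Qed.
Lemma SP1 n : SL n * PL n.+1 = SL n.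
Proof.
apply: L_eq => v; apply/funext => f; rewrite LmulE /= /Sf /P.
case: (asboolP (inI n.+1 f)) => h //=; case: ifP => // _.
by rewrite (asboolT (proj2 (upd_inS _ _ _) h)).
Qed.
Lemma PT1 n : PL n.+1 * TL n = TL n.
Proof.
apply: L_eq => v; apply/funext => f; rewrite LmulE /= /Tf /P.
by case: (asboolP (inI n.+1 f)).
Qed.
Lemma TP1 n : TL n * PL n.+1 = TL n.
Proof.
apply: L_eq => v; apply/funext => f; rewrite LmulE /= /Tf /P.
case: (asboolP (inI n.+1 f)) => h //=.
by rewrite (asboolT (proj2 (upd_inS _ _ _) h)).
Qed.

Lemma fibS n v k : fib n (Sf n v) k = if (0 < k)%N then fib n v k.-1 else 0.
Proof.
apply/funext => g; rewrite /fib /Sf; case: (asboolP (inI n g)) => h.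
  rewrite (asboolT (proj2 (upd_inS _ _ _) (inI_Sn h))) upd_at upd_upd /=.
  by case: ifP => //; rewrite /fib (asboolT h).
by case: ifP => //; rewrite /fib (asboolF h).
Qed.
Lemma fibT n v k : fib n (Tf n v) k = fib n v k.+1.
Proof.
apply/funext => g; rewrite /fib /Tf; case: (asboolP (inI n g)) => h //.
by rewrite (asboolT (proj2 (upd_inS _ _ _) (inI_Sn h))) upd_at upd_upd.
Qed.
Lemma fibP n v k : fib n (P n v) k = if k == 0%N then P n v else 0.
Proof.
apply/funext => g; rewrite /fib /P; case: (asboolP (inI n g)) => h.
  case: eqP => [->|/eqP k0].
    by rewrite inI_upd0 // (asboolT h).
  by rewrite (asboolF (_ : ~ inI n (upd g n k))) // => /inI_upd_k /eqP; rewrite (negbTE k0).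
by case: eqP => // _; rewrite (asboolF h).
Qed.
Lemma fibP1 n v k : fib n (P n.+1 v) k = fib n v k.
Proof.
apply/funext => g; rewrite /fib /P; case: (asboolP (inI n g)) => h //.
by rewrite (asboolT (proj2 (upd_inS _ _ _) (inI_Sn h))).
Qed.
Lemma fib0 n v : fib n v 0 = P n v.
Proof.
apply/funext => g; rewrite /fib /P; case: (asboolP (inI n g)) => h //.
by rewrite inI_upd0.
Qed.

Lemma DS n a : DL n a * SL n = SL n * DL n a.
Proof.
apply: L_eq => v; apply/funext => f; rewrite !LmulE /= /Df /Sf fibS.
case: (asboolP (inI n.+1 f)) => h //=.
case: (posnP (f n)) => fn /=; first by rewrite (lin0 (linL a)).
by rewrite (asboolT (proj2 (upd_inS _ _ _) h)) upd_at upd_upd.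
Qed.
Lemma TD n a : TL n * DL n a = DL n a * TL n.
Proof.
apply: L_eq => v; apply/funext => f; rewrite !LmulE /= /Df /Tf fibT.
case: (asboolP (inI n.+1 f)) => h //=.
by rewrite (asboolT (proj2 (upd_inS _ _ _) h)) upd_at upd_upd.
Qed.


Lemma DL_lin n (c : K) a b : DL n (c *: a + b) = c *: DL n a + DL n b.
Proof.
apply: L_eq => v; apply/funext => f; rewrite LaddE LscaleE vaddE vscaleE /= /Df.
by case: (asboolP (inI n.+1 f)) => h //; rewrite scaler0 addr0.
Qed.
Lemma DL_add n a b : DL n (a + b) = DL n a + DL n b.
Proof. by have := DL_lin n 1 a b; rewrite !scale1r. Qed.
Lemma DL0 n : DL n 0 = 0.
Proof. by have := DL_add n 0 0; rewrite addr0 => /(canLR (addKr (DL n 0))); rewrite addNr. Qed.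
Lemma DL_opp n a : DL n (- a) = - DL n a.
Proof. by apply/eqP; rewrite -subr_eq0 opprK -DL_add addNr DL0. Qed.
Lemma DL_sub n a b : DL n (a - b) = DL n a - DL n b.
Proof. by rewrite DL_add DL_opp. Qed.

Lemma fibD n b v k : fib n (Df n b v) k = P n (b (fib n v k)).
Proof.
apply/funext => g; rewrite /fib /Df /P; case: (asboolP (inI n g)) => h //.
by rewrite (asboolT (proj2 (upd_inS _ _ _) (inI_Sn h))) upd_at upd_upd inI_upd0.
Qed.

Lemma DL_mul n a b : PL n * b = b -> DL n (a * b) = DL n a * DL n b.
Proof.
move=> hb; apply: L_eq => v; apply/funext => f; rewrite !LmulE /= /Df.
case: (asboolP (inI n.+1 f)) => h //.
rewrite fibD LmulE; congr (a _ _); by rewrite -[in LHS]hb.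
Qed.

Lemma DL_P n : DL n (PL n) = PL n.+1.
Proof.
apply: L_eq => v; apply/funext => f; rewrite /= /Df /P.
case: (asboolP (inI n.+1 f)) => h //.
by rewrite /= /P (asboolT (proj2 (upd0_in _ _) h)) /fib (asboolT (proj2 (upd0_in _ _) h)) upd_upd upd_same.
Qed.

Lemma DLP n a : PL n * a * PL n = a -> DL n a * PL n = a.
Proof.
move=> ha; apply: L_eq => v; apply/funext => f; rewrite LmulE /= /Df fibP -[in RHS]ha.
rewrite !LmulE /= /P.
case: (asboolP (inI n.+1 f)) => h; last first.
  by case: (asboolP (inI n f)) => // h'; case: h; apply: inI_Sn.
case: eqP => fn.
  have hf : inI n f by have := (upd0_in n f).2 h; rewrite -fn upd_same.
  by rewrite (asboolT hf) -fn upd_same.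
rewrite (lin0 (linL a)) (asboolF (_ : ~ inI n f)) // => h'.
by apply: fn; apply: inI_at.
Qed.

Lemma PDL n a : PL n * a * PL n = a -> PL n * DL n a = a.
Proof.
move=> ha; apply: L_eq => v; apply/funext => f; rewrite LmulE /= -[in RHS]ha !LmulE /= /P /Df.
case: (asboolP (inI n f)) => h //.
by rewrite (asboolT (inI_Sn h)) (inI_at h) fib0 inI_upd0.
Qed.

Lemma PDL1 n a : PL n.+1 * DL n a = DL n a.
Proof.
apply: L_eq => v; apply/funext => f; rewrite LmulE /= /P /Df.
by case: (asboolP (inI n.+1 f)).
Qed.
Lemma DLP1 n a : DL n a * PL n.+1 = DL n a.
Proof.
apply: L_eq => v; apply/funext => f; rewrite LmulE /= /Df.
by case: (asboolP (inI n.+1 f)) => h //; rewrite fibP1.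
Qed.


Lemma regular n (x : L) : PL n * x * PL n = x ->
  exists y : L, [/\ PL n * y * PL n = y, x * y * x = x & y * x * y = y].
Proof.
move=> hx.
have PPv u : P n (P n u) = P n u by rewrite (PP _ (leqnn n)).1.
have hxv u : x u = P n (x (P n u)) by rewrite -{1}hx.
have Pxv u : P n (x u) = x u by rewrite hxv PPv.
have xPv u : x (P n u) = x u by rewrite [LHS]hxv [RHS]hxv PPv.
have lx := linL x.
pose W := fun v : V => P n v = v.
have sW : subsp W.
  by split; [rewrite /W (lin0 (@P_lin n)) | move=> a u w hu hw; rewrite /W P_lin hu hw].
pose M1 := fun v => W v /\ x v = 0.
have sM1 : subsp M1.
  split; first by split; [case: sW | exact: lin0].
  by move=> a u w [hu xu] [hw xw]; split; [case: sW => _; apply | rewrite lx xu xw scaler0 addr0].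
pose M2 := fun v => exists u, v = x u.
have sM2 : subsp M2.
  split; first by exists 0; rewrite (lin0 lx).
  by move=> a _ _ [u ->] [w ->]; exists (a *: u + w); rewrite lx.
have [C1 [sC1 C1W C1d C1s]] := complement sW sM1 (fun v h => proj1 h).
have M2W v : M2 v -> W v by move=> [u ->]; rewrite /W Pxv.
have [C2 [sC2 C2W C2d C2s]] := complement sW sM2 M2W.
pose Y w c := C1 c /\ exists d, C2 d /\ P n w = x c + d.
have Yex w : exists c, Y w c.
  have [m [d [[u0 em] C2d' ew]]] := C2s _ (PPv w).
  have [k [c [[_ xk] C1c e]]] := C1s _ (PPv u0).
  exists c; split => //; exists d; split => //.
  by rewrite ew em -xPv e (lin_add lx) xk add0r.
have Yun w c c' : Y w c -> Y w c' -> c = c'.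
  move=> [C1c [d [C2d' e]]] [C1c' [d' [C2d'' e']]].
  have h1 : x (c - c') = d' - d.
    rewrite (lin_add lx) -scaleN1r (lin_scale lx) scaleN1r; apply: zhelp; by rewrite -e -e'.
  have h2 : d' - d = 0.
    apply: C2d; last by exists (c - c').
    by rewrite -scaleN1r addrC; case: sC2 => _; apply.
  apply/eqP; rewrite -subr_eq0; apply/eqP; apply: C1d.
    by rewrite -scaleN1r addrC; case: sC1 => _; apply.
  split; last by rewrite h1 h2.
  by rewrite -scaleN1r addrC; case: sW => _; apply; apply: C1W.
have [yf Yy] := choice Yex.
have ylin : yf \in linp.
  apply/asboolP => a u w; apply: Yun (Yy _) _.
  have [C1u [du [C2u eu]]] := Yy u; have [C1w [dw [C2w ew]]] := Yy w.
  split; first by case: sC1 => _; apply.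
  exists (a *: du + dw); split; first by case: sC2 => _; apply.
  rewrite P_lin eu ew lx scalerDr -!addrA; congr (_ + _).
  by rewrite addrCA.
pose y := MkL ylin.
exists y; split.
- apply: L_eq => v; rewrite !LmulE /=.
  have -> : yf (P n v) = yf v.
    by apply: Yun (Yy _) _; have [C1v [d [C2v e]]] := Yy v; split => //; exists d; rewrite PPv.
  by apply: C1W; have [] := Yy v.
- apply: L_eq => v; rewrite !LmulE /=.
  have [C1c [d [C2v e]]] := Yy (x v).
  have d0 : d = 0.
    apply: C2d => //; exists (v - yf (x v)).
    rewrite (lin_add lx) -scaleN1r (lin_scale lx) scaleN1r.
    by apply/eqP; rewrite eq_sym subr_eq addrC -e Pxv.
  by apply/esym; rewrite -[LHS]Pxv e d0 addr0.
- apply: L_eq => v; rewrite !LmulE /=.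
  apply: Yun (Yy _) _; split; first by have [] := Yy v.
  by exists 0; split; [case: sC2 | rewrite addr0 Pxv].
Qed.

Lemma LmulZl (a : K) (x y : L) : (a *: x) * y = a *: (x * y).
Proof. by apply: L_eq. Qed.
Lemma LmulZr (a : K) (x y : L) : x * (a *: y) = a *: (x * y).
Proof. apply: L_eq => v; rewrite LmulE !LscaleE LmulE; exact: (lin_scale (linL x)). Qed.

Lemma bnd_monoL n m (x : L) : (n <= m)%N -> PL n * x * PL n = x -> PL m * x * PL m = x.
Proof.
move=> nm hx; have [h1 h2] := PPL nm.
by rewrite -hx !mulrA h2 -!mulrA h1.
Qed.

Definition bndp : {pred L} := fun x => `[< exists n, PL n * x * PL n = x >].

Lemma bndp_closed : subsemimod_closed bndp.
Proof.
split; [split|].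
- by apply/asboolP; exists 0%N; rewrite mulr0 mul0r.
- move=> x y /asboolP[n hx] /asboolP[m hy]; apply/asboolP; exists (maxn n m).
  by rewrite mulrDr mulrDl (bnd_monoL (leq_maxl n m) hx) (bnd_monoL (leq_maxr n m) hy).
- move=> a x /asboolP[n hx]; apply/asboolP; exists n.
  by rewrite LmulZr LmulZl hx.
Qed.

HB.instance Definition _ := GRing.isSubmodClosed.Build K L bndp bndp_closed.

Record Rt := MkR { rval :> L; rvalP : rval \in bndp }.
HB.instance Definition _ := [isSub for rval].
HB.instance Definition _ := [Choice of Rt by <:].
HB.instance Definition _ := [SubChoice_isSubLmodule of Rt by <:].

Lemma rval_add (x y : Rt) : rval (x + y) = rval x + rval y. Proof. by []. Qed.
Lemma rval_scale (a : K) (x : Rt) : rval (a *: x) = a *: rval x. Proof. by []. Qed.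
Lemma rval_opp (x : Rt) : rval (- x) = - rval x. Proof. by []. Qed.

Lemma bndp_mul (x y : Rt) : rval x * rval y \in bndp.
Proof.
case: x y => [x /asboolP[n hx]] [y /asboolP[m hy]] /=; apply/asboolP; exists (maxn n m).
have hx' := bnd_monoL (leq_maxl n m) hx; have hy' := bnd_monoL (leq_maxr n m) hy.
set k := maxn n m in hx' hy' *.
have PLk := PLL k.
have Px : PL k * x = x by rewrite -hx' !mulrA PLk.
have yP : y * PL k = y by rewrite -hy' -!mulrA PLk.
by rewrite mulrA Px -mulrA yP.
Qed.

Definition Rmul (x y : Rt) : Rt := MkR (bndp_mul x y).
Lemma rval_mul x y : rval (Rmul x y) = rval x * rval y. Proof. by []. Qed.

Lemma Rt_nu : is_nu_algebra Rmul.
Proof.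
split.
- by move=> x y z; apply: val_inj; rewrite /= mulrA.
- by move=> x y z; apply: val_inj; rewrite /= mulrDl.
- by move=> x y z; apply: val_inj; rewrite /= mulrDr.
- by move=> a x y; apply: val_inj; rewrite /= LmulZl.
- by move=> a x y; apply: val_inj; rewrite /= LmulZr.
Qed.


Lemma bnd_PL n (a : L) : PL n * a * PL n = a -> PL n * a = a /\ a * PL n = a.
Proof.
move=> h; split; first by rewrite -h !mulrA PLL.
by rewrite -h -!mulrA PLL.
Qed.

Lemma elementwise : elementwise_locally_unit_regular Rmul.
Proof.
move=> xr.
have [n hx] : exists n, PL n * rval xr * PL n = rval xr by apply/asboolP; exact: rvalP.
set x := rval xr in hx.
have [y [hy xyx yxy]] := regular hx.
have [Px xP] := bnd_PL hx; have [Py yP] := bnd_PL hy.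
set Pn := PL n in hx hy Px xP Py yP xyx yxy.
have PP := PLL n.
have Pe1 : Pn * (y * x) = y * x by rewrite mulrA Py.
have e1P : y * x * Pn = y * x by rewrite -mulrA xP.
have e1e1 : y * x * (y * x) = y * x by rewrite mulrA yxy.
have Pe2 : Pn * (x * y) = x * y by rewrite mulrA Px.
have e2P : x * y * Pn = x * y by rewrite -mulrA yP.
have e2e2 : x * y * (x * y) = x * y by rewrite mulrA xyx.
have [c1a c1b c1c c1d c1e] := idem_compl PP Pe1 e1P e1e1.
have [c2a c2b c2c c2d c2e] := idem_compl PP Pe2 e2P e2e2.
have b1 : Pn * (Pn - y * x) * Pn = Pn - y * x by rewrite c1d c1e.
have b2 : Pn * (y * x) * Pn = y * x by rewrite Pe1 e1P.
have b3 : Pn * (Pn - x * y) * Pn = Pn - x * y by rewrite c2d c2e.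
have b4 : Pn * (x * y) * Pn = x * y by rewrite Pe2 e2P.
set A := DL n (Pn - y * x); set C := DL n (y * x).
set Dd := DL n (Pn - x * y); set Ii := DL n (x * y).
set Q := PL n.+1; set S := SL n; set T := TL n.
have TS' : T * S = Q := TS n.
have ST' : S * T = Q - Pn := ST n.
have PS' : Pn * S = 0 := PS n.
have TP' : T * Pn = 0 := TP n.
have AC1 : A + C = Q by rewrite /A /C -DL_add subrK DL_P.
have DI1 : Dd + Ii = Q by rewrite /Dd /Ii -DL_add subrK DL_P.
have AC : A * C = 0 by rewrite /A /C -DL_mul // c1c DL0.
have CA : C * A = 0 by rewrite /A /C -DL_mul // c1b DL0.
have DI : Dd * Ii = 0 by rewrite /Dd /Ii -DL_mul // c2c DL0.
have ID : Ii * Dd = 0 by rewrite /Dd /Ii -DL_mul // c2b DL0.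
have AA : A * A = A by rewrite /A -DL_mul // c1a.
have CC : C * C = C by rewrite /C -DL_mul // e1e1.
have DD : Dd * Dd = Dd by rewrite /Dd -DL_mul // c2a.
have II : Ii * Ii = Ii by rewrite /Ii -DL_mul // e2e2.
have AS : A * S = S * A := DS n _.
have CS : C * S = S * C := DS n _.
have DS' : Dd * S = S * Dd := DS n _.
have IS : Ii * S = S * Ii := DS n _.
have TA : T * A = A * T := TD n _.
have TC : T * C = C * T := TD n _.
have TD' : T * Dd = Dd * T := TD n _.
have TI : T * Ii = Ii * T := TD n _.
have AP : A * Pn = Pn - y * x := DLP b1.
have PA : Pn * A = Pn - y * x := PDL b1.
have CP : C * Pn = y * x := DLP b2.
have DP : Dd * Pn = Pn - x * y := DLP b3.
have PD : Pn * Dd = Pn - x * y := PDL b3.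
have IP : Ii * Pn = x * y := DLP b4.
have [PQ QP] : Pn * Q = Pn /\ Q * Pn = Pn := PPL (leqnSn n).
have QA : Q * A = A := PDL1 _ _. have AQ : A * Q = A := DLP1 _ _.
have QC : Q * C = C := PDL1 _ _. have CQ : C * Q = C := DLP1 _ _.
have QD : Q * Dd = Dd := PDL1 _ _. have DQ : Dd * Q = Dd := DLP1 _ _.
have QI : Q * Ii = Ii := PDL1 _ _. have IQ : Ii * Q = Ii := DLP1 _ _.
have QS : Q * S = S := PS1 n. have SQ : S * Q = S := SP1 n.
have QT : Q * T = T := PT1 n. have TQ : T * Q = T := TP1 n.
destruct (@swindle_all L Pn Q S T x y A C Dd Ii) as [uv vu xux Qu Qv]; try assumption.
have ub : @uu L S T y A C Dd Ii \in bndp by apply/asboolP; exists n.+1.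
have vb : @vv L S T x A C Dd Ii \in bndp by apply/asboolP; exists n.+1.
have eb : Q \in bndp by apply/asboolP; exists n.+1; rewrite !PLL.
pose u := MkR ub; pose v := MkR vb; pose e := MkR eb.
have Qx : Q * x * Q = x by rewrite -hx !mulrA QP -!mulrA PQ.
exists e, u; split.
- by apply: val_inj; rewrite /= PLL.
- by exists xr; apply: val_inj.
- split; first by exists u; apply: val_inj.
  exists v; split; first by exists v; apply: val_inj.
  by split; apply: val_inj.
- by apply: val_inj.
Qed.

Lemma PL0_neq0 : PL 0 != 0.
Proof.
apply/eqP => /(congr1 (fun z : L => z (fun _ => 1) (fun _ => 0%N))).
rewrite /= /P (asboolT (_ : inI 0 (fun _ => 0%N))) //.
by move/eqP; rewrite oner_eq0.
Qed.

Lemma not_local : ~ locally_unit_regular Rmul.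
Proof.
move=> H.
have sb : SL 0 \in bndp by apply/asboolP; exists 1%N; rewrite PS1 SP1.
have tb : TL 0 \in bndp by apply/asboolP; exists 1%N; rewrite PT1 TP1.
pose s := MkR sb; pose t := MkR tb.
have [S [hS Sst hU]] := H [:: s; t].
move: hS hU; rewrite /is_subalgebra /unital_unit_regular /is_identity_of /is_unit_in.
move=> [S0 Sadd Sscale Smul] [f [[Sf fid] ureg]].
have Ss : S s by apply: Sst; rewrite inE eqxx.
have St : S t by apply: Sst; rewrite !inE eqxx orbT.
have Sp : S (Rmul t s) by apply: (Smul).
pose x := s + (f + (-1) *: Rmul t s).
have Sx : S x by apply: (Sadd) => //; apply: (Sadd) => //; apply: (Sscale).
have [u [[Su [w [Sw [uw wu]]]] xux]] := ureg x Sx.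
have lift (a b : Rt) : a = b -> rval a = rval b by move=> ->.
have fl z : S z -> rval f * rval z = rval z /\ rval z * rval f = rval z.
  by move=> Sz; have [h1 h2] := fid z Sz; split; [apply: (lift _ _ h1) | apply: (lift _ _ h2)].
have [fs sf] := fl _ Ss. have [ft tf] := fl _ St. have [fp pf] := fl _ Sp.
have [fu uf] := fl _ Su. have [fw wf] := fl _ Sw. have [ff _] := fl _ Sf.
have ts : TL 0 * SL 0 = PL 1 := TS 0.
rewrite /= ts in fp pf.
have := @nonlocal L (SL 0) (TL 0) (PL 1) (PL 0) (rval f) (rval u) (rval w)
  ts (ST 0) (PS1 0) (SP1 0) (PT1 0) (TP1 0) (PLL 1) fs sf ft tf fp pf ff fu wf
  (lift _ _ wu).
have xv : rval x = SL 0 + (rval f - PL 1) by rewrite /x /= ts scaleN1r.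
move=> h; apply: (negP PL0_neq0); apply/eqP; apply: h.
by have := lift _ _ xux; rewrite /= ts scaleN1r.
Qed.

End Alg.

Theorem mainTheorem16 (K : fieldType) :
  exists (V : lmodType K) (mul : V -> V -> V),
    [/\ is_nu_algebra mul,
        elementwise_locally_unit_regular mul
      & ~ locally_unit_regular mul].
Proof.
exists (Rt K), (@Rmul K); split; [exact: Rt_nu | exact: elementwise | exact: not_local].
Qed.
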